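(* Let $w\in\Sigma_{0,1,n}$. If there exists some planar expression for $w$, then the reduced expression of $w$ is planar, i.e. $w$ is a planar word.
   Context: $\Sigma_{0,1,n}$ is the free group on $t_1,\dots,t_n$; write $\overline t_k=t_k^{-1}$. Let $A$ be the set of $2n+2$ formal symbols $\overline z_1,t_1,\overline t_1,\dots,t_n,\overline t_n,z_1$, totally ordered by $\overline z_1<t_1<\overline t_1<t_2<\overline t_2<\dots<t_n<\overline t_n<z_1$. An expression for $w$ is a finite sequence $(a_1,\dots,a_m)$ of elements of $\{t_1^{\pm1},\dots,t_n^{\pm1}\}$ with $a_1\cdots a_m=w$, not necessarily reduced. Its Whitehead expansion is the $(2m+2)$-tuple $(c_1,\dots,c_{2m+2})=(\overline z_1,a_1,\overline a_1,a_2,\overline a_2,\dots,a_m,\overline a_m,z_1)$ of elements of $A$. Two $2$-element sets $\{a,b\},\{c,d\}$ of integers are nested if $a,b,c,d$ are distinct and either both or neither of $c,d$ lie strictly between $a$ and $b$. A family of such sets is nested if every two distinct members are nested. A $2M$-tuple $(c_1,\dots,c_{2M})$ of elements of $A$ is planar if there is a permutation $\pi$ of $\{1,\dots,2M\}$ satisfying three conditions: - $\pi(i)<\pi(j)$ implies $c_i\le c_j$; - the family $\{\{\pi(2i-1),\pi(2i)\}:1\le i\le M\}$ is nested; - the family $\{\{\pi(2i),\pi(2i+1)\}:1\le i\le M-1\}$ is nested. An expression is planar if its Whitehead expansion is planar. $w$ is a planar word if its unique reduced expression is planar. *)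

(* Defs.v *)
From Stdlib Require Import Relations.
From mathcomp Require Import all_boot.
Set Implicit Arguments. Unset Strict Implicit. Unset Printing Implicit Defensive.

(* A letter of the free group on t_1..t_n: (k, false) = t_(k+1), (k, true) = t_(k+1)^-1. *)
Definition letter (n : nat) := ('I_n * bool)%type.

Definition linv n (a : letter n) : letter n := (a.1, ~~ a.2).

Definition cancel_step n (u v : seq (letter n)) : Prop :=
  exists p q (a : letter n), u = p ++ a :: linv a :: q /\ v = p ++ q.

(* Equality in the free group Sigma_{0,1,n} of the products of two expressions. *)
Definition free_eq n : relation (seq (letter n)) :=
  clos_refl_sym_trans _ (@cancel_step n).

Definition reduced n (w : seq (letter n)) : Prop :=
  forall p q (a : letter n), w <> p ++ a :: linv a :: q.

(* The alphabet A encoded in nat, preserving its order: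
   zbar_1 |-> 0, t_(k+1) |-> 2k+1, tbar_(k+1) |-> 2k+2, z_1 |-> 2n+1. *)
Definition code n (a : letter n) : nat := (2 * a.1 + 1 + a.2)%N.
Definition zbar1 : nat := 0.
Definition z1 (n : nat) : nat := (2 * n + 1)%N.

Definition whitehead n (e : seq (letter n)) : seq nat :=
  zbar1 :: flatten [seq [:: code a; code (linv a)] | a <- e] ++ [:: z1 n].

Definition between (a b x : nat) : bool := (minn a b < x) && (x < maxn a b).
Definition nested_pair (a b c d : nat) : Prop :=
  uniq [:: a; b; c; d] /\ (between a b c = between a b d).

Definition same_set (a b c d : nat) : Prop := (a = c /\ b = d) \/ (a = d /\ b = c).

(* Family {{f(2j), f(2j+1)} : j < M} (0-based) nested, and
   family {{f(2j+1), f(2j+2)} : j < M-1} nested. *)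
Definition nested_fam (pr : nat -> nat * nat) (K : nat) : Prop :=
  forall j j', j < K -> j' < K ->
    ~ same_set (pr j).1 (pr j).2 (pr j').1 (pr j').2 ->
    nested_pair (pr j).1 (pr j).2 (pr j').1 (pr j').2.

(* Planar 2M-tuple (0-based indices; permutation pi of {0..2M-1} given as
   the sequence of its values). *)
Definition planar_tuple (c : seq nat) : Prop :=
  let N := size c in let M := N %/ 2 in
  exists s : seq nat, perm_eq s (iota 0 N) /\
    let pi := fun i => nth 0 s i in
    (forall i j, i < N -> j < N -> pi i < pi j -> nth 0 c i <= nth 0 c j) /\
    nested_fam (fun j => (pi (2 * j), pi (2 * j + 1))) M /\
    nested_fam (fun j => (pi (2 * j + 1), pi (2 * j + 2))) M.-1.

Definition planar_expr n (e : seq (letter n)) : Prop := planar_tuple (whitehead e).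

(* Main.v *)
Require Import Defs.
From Stdlib Require Import Relations.
From mathcomp Require Import all_boot.
From Stdlib Require Import Lia Classical.
Set Implicit Arguments. Unset Strict Implicit. Unset Printing Implicit Defensive.


Definition inb (a b x : nat) : Prop := (lt a x /\ lt x b) \/ (lt b x /\ lt x a).

Lemma betweenP a b x : between a b x <-> inb a b x.
Proof.
rewrite /between /inb; case: (leqP a b) => h.
  move/leP: h => h.
  split => [/andP[/ltP h1 /ltP h2]| H]; first lia.
  apply/andP; split; apply/ltP; lia.
move/ltP: h => h.
split => [/andP[/ltP h1 /ltP h2]| H]; first lia.
apply/andP; split; apply/ltP; lia.
Qed.

Definition NP (a b c d : nat) : Prop :=
  (a <> b /\ a <> c /\ a <> d /\ b <> c /\ b <> d /\ c <> d) /\ (inb a b c <-> inb a b d).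

Lemma uniq4P (a b c d : nat) : uniq [:: a; b; c; d] <->
  (a <> b /\ a <> c /\ a <> d /\ b <> c /\ b <> d /\ c <> d).
Proof.
have -> : uniq [:: a; b; c; d] = [&& a != b, a != c, a != d, b != c, b != d & c != d].
  by rewrite /= !inE !negb_or andbT !andbA.
split.
  by move=> /andP[/eqP ? /andP[/eqP ? /andP[/eqP ? /andP[/eqP ? /andP[/eqP ? /eqP ?]]]]].
move=> [h1 [h2 [h3 [h4 [h5 h6]]]]].
by repeat (apply/andP; split); apply/eqP.
Qed.

Lemma nestedP a b c d : nested_pair a b c d <-> NP a b c d.
Proof.
rewrite /nested_pair /NP uniq4P.
have E : forall x y : bool, x = y <-> (x <-> y).
  by move=> [] [] /=; split => // [[H1 H2]]; [have := H1 isT | have := H2 isT].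
by rewrite E !betweenP.
Qed.


Lemma linvK n (a : letter n) : linv (linv a) = a.
Proof. by case: a => k b; rewrite /linv /= negbK. Qed.

Definition red_cons n (a : letter n) (s : seq (letter n)) :=
  if s is b :: r then (if b == linv a then r else a :: s) else [:: a].
Definition nf n (s : seq (letter n)) := foldr (@red_cons n) [::] s.

Lemma reduced_cons n (a : letter n) r : reduced (a :: r) -> reduced r.
Proof. by move=> H p q x E; apply: (H (a :: p) q x); rewrite E. Qed.

Lemma reduced_red_cons n (a : letter n) r : reduced r -> reduced (red_cons a r).
Proof.
case: r => [|b r] /= H.
  by move=> [|y p] q x //= [] _; case: p.
case: eqP => [_|ne]; first by apply: reduced_cons H.
move=> [|y p] q x /=.
  by case=> E1 E2 _; apply: ne; rewrite E2 E1.
by case=> _ E2; exact: (H p q x E2).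
Qed.

Lemma nf_reduced n (s : seq (letter n)) : reduced (nf s).
Proof.
elim: s => [|a s IH] /=; first by move=> [|y p] q x.
exact: reduced_red_cons.
Qed.

Lemma nf_id n (s : seq (letter n)) : reduced s -> nf s = s.
Proof.
elim: s => [|a s IH] //= H.
rewrite IH; last exact: reduced_cons H.
case: s H {IH} => [|b s] //= H.
case: eqP => // E.
by exfalso; apply: (H [::] s a); rewrite E.
Qed.

Lemma red_cons_cancel n (a : letter n) r : reduced r ->
  red_cons a (red_cons (linv a) r) = r.
Proof.
case: r => [|b r] /= H; first by rewrite eqxx.
rewrite linvK; case: eqP => [Eb|ne] /=.
  case: r H => [|c r] //= H; first by rewrite Eb.
  case: eqP => E; last by rewrite Eb.
  by exfalso; apply: (H [::] r b); rewrite E Eb.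
by case: eqP.
Qed.

Lemma nf_cancel n (p q : seq (letter n)) a :
  nf (p ++ a :: linv a :: q) = nf (p ++ q).
Proof.
rewrite /nf !foldr_cat /=.
by rewrite red_cons_cancel //; apply: nf_reduced.
Qed.

Lemma free_eq_nf n (u v : seq (letter n)) : free_eq u v -> nf u = nf v.
Proof.
elim => //.
- by move=> x y [p [q [a [-> ->]]]]; apply: nf_cancel.
- by move=> x y z _ -> _ ->.
Qed.

Lemma free_eq_reduced n (u v : seq (letter n)) :
  free_eq u v -> reduced u -> reduced v -> u = v.
Proof.
by move=> /free_eq_nf E Hu Hv; rewrite -(nf_id Hu) -(nf_id Hv).
Qed.


Ltac nlia := intros; repeat match goal with
  | H : is_true (leq _ _) |- _ => move/leP: H => H
  | H : is_true (~~ leq _ _) |- _ => rewrite -ltnNge in H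
  | |- is_true (leq _ _) => apply/leP
  end; unfold addn, subn, muln in *; lia.

Lemma perm_facts (s : seq nat) N : perm_eq s (iota 0 N) ->
  [/\ size s = N,
      forall i, i < N -> nth 0 s i < N,
      forall i j, i < N -> j < N -> nth 0 s i = nth 0 s j -> i = j &
      forall x, x < N -> exists2 i, i < N & nth 0 s i = x].
Proof.
move=> P; have Sz : size s = N by rewrite (perm_size P) size_iota.
have U : uniq s by rewrite (perm_uniq P) iota_uniq.
split => //.
- move=> i Hi; have : nth 0 s i \in s by apply: mem_nth; rewrite Sz.
  by rewrite (perm_mem P) mem_iota.
- move=> i j Hi Hj E; apply/eqP; rewrite -(nth_uniq 0 _ _ U) ?Sz //; exact/eqP.
- move=> x Hx; have xs : x \in s by rewrite (perm_mem P) mem_iota.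
  by exists (index x s); [rewrite -Sz index_mem | rewrite nth_index].
Qed.

Definition cnt (R : seq nat) x := count (fun z => z \notin R) (iota 0 x).

Lemma cntS R x : cnt R x.+1 = cnt R x + (x \notin R).
Proof. by rewrite /cnt -addn1 iotaD count_cat /= addn0. Qed.

Lemma cnt_mono R x y : x <= y -> cnt R x <= cnt R y.
Proof.
move=> /subnKC <-; elim: (y - x) => [|k IH]; first by rewrite addn0.
by rewrite addnS cntS; apply: leq_trans IH (leq_addr _ _).
Qed.

Lemma cnt_strict R x y : x < y -> x \notin R -> cnt R x < cnt R y.
Proof.
move=> lt nR; apply: leq_trans (cnt_mono R lt).
by rewrite cntS nR addn1.
Qed.

Lemma cnt_le R x : cnt R x <= x.
Proof. by rewrite /cnt (leq_trans (count_size _ _)) // size_iota. Qed.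

Lemma cnt_bound R N : uniq R -> all (fun r => r < N) R -> cnt R N <= N - size R.
Proof.
move=> U A.
have := count_predC (fun z => z \notin R) (iota 0 N).
rewrite size_iota -/(cnt R N) => E.
have : size R <= count (predC (fun z => z \notin R)) (iota 0 N).
  rewrite -size_filter; apply: uniq_leq_size => // r rR.
  rewrite mem_filter /= negbK rR mem_iota /=.
  by move/allP: A => /(_ r rR).
move: E; rewrite /cnt. nlia.
Qed.

Lemma inb_g g a b x :
  (lt a b -> lt (g a) (g b)) -> (lt b a -> lt (g b) (g a)) ->
  (lt a x -> lt (g a) (g x)) -> (lt x a -> lt (g x) (g a)) ->
  (lt b x -> lt (g b) (g x)) -> (lt x b -> lt (g x) (g b)) ->
  a <> b -> a <> x -> b <> x ->
  (inb a b x <-> inb (g a) (g b) (g x)).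
Proof.
move=> h1 h2 h3 h4 h5 h6 d1 d2 d3; rewrite /inb.
have [lab|lba] : lt a b \/ lt b a by lia.
  have := h1 lab.
  have [lax|lxa] : lt a x \/ lt x a by lia.
    have := h3 lax.
    have [lbx|lxb] : lt b x \/ lt x b by lia.
      by have := h5 lbx; lia.
    by have := h6 lxb; lia.
  by have := h4 lxa; lia.
have := h2 lba.
have [lax|lxa] : lt a x \/ lt x a by lia.
  by have := h3 lax; lia.
have := h4 lxa.
have [lbx|lxb] : lt b x \/ lt x b by lia.
  by have := h5 lbx; lia.
by have := h6 lxb; lia.
Qed.

Lemma NP_mono g a b c d :
  (forall x y, (x = a \/ x = b \/ x = c \/ x = d) -> (y = a \/ y = b \/ y = c \/ y = d) ->
     lt x y -> lt (g x) (g y)) ->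
  NP a b c d -> NP (g a) (g b) (g c) (g d).
Proof.
move=> H [[d1 [d2 [d3 [d4 [d5 d6]]]]] E].
have gi : forall x y, (x = a \/ x = b \/ x = c \/ x = d) -> (y = a \/ y = b \/ y = c \/ y = d) ->
   x <> y -> g x <> g y.
  move=> x y hx hy nxy; have [l|l] : lt x y \/ lt y x by lia.
    by have := H x y hx hy l; lia.
  by have := H y x hy hx l; lia.
split.
  repeat split; apply: gi; tauto.
rewrite -!inb_g //; try (apply: H; tauto).
Qed.

Lemma NP_sym a b c d : NP a b c d -> NP c d a b.
Proof. rewrite /NP /inb. lia. Qed.

Lemma half_adj X P1 P4 Y u v : (inb X P1 u <-> inb X P1 v) -> (inb P4 Y u <-> inb P4 Y v) ->
  X <> u -> X <> v -> P1 <> u -> P1 <> v -> P4 <> u -> P4 <> v -> Y <> u -> Y <> v -> u <> v ->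
  (P1 = S P4 \/ P4 = S P1) -> inb X Y u -> inb X Y v.
Proof.
intros [I1 I1'] [I2 I2'] d1 d2 d3 d4 d5 d6 d7 d8 d9 A hu.
destruct (Compare_dec.lt_dec X Y) as [hxy|hxy].
- destruct hu as [hu|hu]; [|lia].
  destruct A as [A|A]; subst.
  + unfold inb in *; lia.
  + unfold inb in *; lia.
- destruct hu as [hu|hu]; [lia|].
  destruct A as [A|A]; subst; unfold inb in *; lia.
Qed.

Lemma NP_adj X P1 P4 Y u v : NP X P1 u v -> NP P4 Y u v -> X <> Y -> X <> P4 ->
  P1 <> Y -> P1 <> P4 -> le ((P1 - P4) + (P4 - P1)) 1 -> NP X Y u v.
Proof.
move=> [[a1 [a2 [a3 [a4 [a5 a6]]]]] I1] [[b1 [b2 [b3 [b4 [b5 b6]]]]] I2] n1 n2 n3 n4 A.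
have A' : P1 = S P4 \/ P4 = S P1.
  clear -A n4; unfold subn, addn in A; lia.
split; first by repeat split.
split.
  by apply: (half_adj I1 I2).
apply: (half_adj (iff_sym I1) (iff_sym I2)); try done; by apply: not_eq_sym.
Qed.


Lemma get_nested (pr : nat -> nat * nat) K j j' : nested_fam pr K -> j < K -> j' < K ->
  ~ same_set (pr j).1 (pr j).2 (pr j').1 (pr j').2 ->
  NP (pr j).1 (pr j).2 (pr j').1 (pr j').2.
Proof. by move=> H hj hj' ns; apply/nestedP; apply: H. Qed.

Lemma transfer (c c' s : seq nat) (t K : nat) :
  size c' = 2*K -> size c = 2*K + 4 -> t < K ->
  (forall i, i < 2*t+1 -> nth 0 c' i = nth 0 c i) ->
  (forall i, 2*t+1 <= i -> nth 0 c' i = nth 0 c (i+4)) ->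
  perm_eq s (iota 0 (size c)) ->
  (forall i j, i < size c -> j < size c -> nth 0 s i < nth 0 s j -> nth 0 c i <= nth 0 c j) ->
  nested_fam (fun j => (nth 0 s (2*j), nth 0 s (2*j+1))) (size c %/ 2) ->
  nested_fam (fun j => (nth 0 s (2*j+1), nth 0 s (2*j+2))) (size c %/ 2).-1 ->
  le (nth 0 s (2*t+1) - nth 0 s (2*t+4) + (nth 0 s (2*t+4) - nth 0 s (2*t+1))) 1 ->
  planar_tuple c'.
Proof.
move=> Sc' Sc tK Hlo Hhi P Srt HF HG Adj.
have [Ss Sb Sinj Ssurj] := perm_facts P.
have HM : size c %/ 2 = K + 2.
  by rewrite Sc (_ : 2*K+4 = (K+2)*2) ?mulnK //; nlia.
rewrite HM in HF HG; rewrite Sc in Ss Sb Sinj Ssurj Srt P.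
set R := [:: nth 0 s (2*t+1); nth 0 s (2*t+2); nth 0 s (2*t+3); nth 0 s (2*t+4)].
have Sinj' : forall i j, i < 2*K+4 -> j < 2*K+4 -> i <> j -> nth 0 s i <> nth 0 s j.
  by move=> i j hi hj nij E; apply: nij; apply: Sinj.
pose old i := if i < 2*t+1 then i else i + 4.
pose g x := cnt R x.
have oldlt : forall i, i < 2*K -> old i < 2*K+4.
  by move=> i Hi; rewrite /old; case: (ltnP i (2*t+1)) => h; nlia.
have oldinj : forall i j, old i = old j -> i = j.
  by move=> i j; rewrite /old; case: (ltnP i (2*t+1)) => h1; case: (ltnP j (2*t+1)) => h2; nlia.
have oldnR : forall i, i < 2*K -> nth 0 s (old i) \notin R.
  move=> i Hi; rewrite !inE; apply/negP; case/or4P => /eqP E; move: E;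
  apply: Sinj'; try exact: oldlt; try nlia; rewrite /old; case: (ltnP i (2*t+1)) => h; nlia.
have gmono : forall x y, x \notin R -> lt x y -> lt (g x) (g y).
  by move=> x y nx /ltP lxy; apply/ltP; apply: cnt_strict.
have gle : forall x y, x <= y -> g x <= g y by move=> x y; apply: cnt_mono.
have cold : forall i, nth 0 c' i = nth 0 c (old i).
  by move=> i; rewrite /old; case: (ltnP i (2*t+1)) => h; [rewrite Hlo | rewrite Hhi //; nlia].
have Rsz : size R = 4 by [].
have RU : uniq R.
  by apply/uniq4P; repeat split; apply: Sinj'; nlia.
have RA : all (fun r => r < 2*K+4) R by rewrite /= !Sb //; nlia.
have gbound : forall x, x < 2*K+4 -> x \notin R -> g x < 2*K.
  move=> x hx nx; have := cnt_strict hx nx; have := cnt_bound RU RA.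
  rewrite Rsz /g; nlia.
exists [seq g (nth 0 s (old i)) | i <- iota 0 (2*K)].
have Nth : forall i, i < 2*K -> nth 0 [seq g (nth 0 s (old i)) | i <- iota 0 (2*K)] i
    = g (nth 0 s (old i)).
  by move=> i Hi; rewrite (nth_map 0) ?size_iota // nth_iota.
have HK : 2*K %/ 2 = K by rewrite mulKn.
rewrite /= Sc' HK.
set s' := [seq g (nth 0 s (old i)) | i <- iota 0 (2*K)].
have gNP : forall x1 x2 x3 x4, x1 \notin R -> x2 \notin R -> x3 \notin R -> x4 \notin R ->
    NP x1 x2 x3 x4 -> nested_pair (g x1) (g x2) (g x3) (g x4).
  move=> x1 x2 x3 x4 n1 n2 n3 n4 H; apply/nestedP; apply: NP_mono H => x y hx hy.
  by apply: gmono; case: hx => [->|[->|[->|->]]].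
have Bd : forall k, k < 6 -> 2*t+k < 2*K+4 by move=> k hk; nlia.
have notR : forall k, k < 2*K+4 -> lt k (2*t+1) \/ lt (2*t+4) k -> nth 0 s k \notin R.
  move=> k hk hk'; rewrite !inE; apply/negP; case/or4P => /eqP E; move: E;
  apply: Sinj'; nlia.
have gNP' : forall a b c0 d, a < 2*K+4 -> b < 2*K+4 -> c0 < 2*K+4 -> d < 2*K+4 ->
   lt a (2*t+1) \/ lt (2*t+4) a -> lt b (2*t+1) \/ lt (2*t+4) b ->
   lt c0 (2*t+1) \/ lt (2*t+4) c0 -> lt d (2*t+1) \/ lt (2*t+4) d ->
   NP (nth 0 s a) (nth 0 s b) (nth 0 s c0) (nth 0 s d) ->
   nested_pair (g (nth 0 s a)) (g (nth 0 s b)) (g (nth 0 s c0)) (g (nth 0 s d)).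
  move=> a b c0 d ha hb hc hd ha' hb' hc' hd'; apply: gNP; exact: notR.
have oldS : forall i, (lt i (2*t+1) /\ old i = i) \/ (le (2*t+1) i /\ old i = i + 4).
  by move=> i; rewrite /old; case: (ltnP i (2*t+1)) => h; [left|right]; split => //; nlia.
pose oG j := if j < t then j else j + 2.
have ogS : forall j, (lt j t /\ oG j = j) \/ (le t j /\ oG j = j + 2).
  by move=> j; rewrite /oG; case: (ltnP j t) => h; [left|right]; split => //; nlia.
have nss : forall a b c0 d, a < 2*K+4 -> b < 2*K+4 -> c0 < 2*K+4 -> d < 2*K+4 ->
   a <> c0 -> a <> d -> b <> c0 -> b <> d ->
   ~ same_set (nth 0 s a) (nth 0 s b) (nth 0 s c0) (nth 0 s d).
  move=> a b c0 d ha hb hc hd n1 n2 n3 n4 [[E1 E2]|[E1 E2]].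
    by apply: n1; apply: Sinj.
  by apply: n2; apply: Sinj.
have HGn : forall j j', lt j (K+1) -> lt j' (K+1) -> j <> j' ->
   NP (nth 0 s (2*j+1)) (nth 0 s (2*j+2)) (nth 0 s (2*j'+1)) (nth 0 s (2*j'+2)).
  move=> j j' hj hj' nj.
  have := get_nested HG (j:=j) (j':=j'); apply => //=; try (rewrite -subn1; nlia).
  apply: nss; nlia.
have HFn : forall j j', lt j (K+2) -> lt j' (K+2) -> j <> j' ->
   NP (nth 0 s (2*j)) (nth 0 s (2*j+1)) (nth 0 s (2*j')) (nth 0 s (2*j'+1)).
  move=> j j' hj hj' nj.
  have := get_nested HF (j:=j) (j':=j'); apply => //=; try nlia.
  apply: nss; nlia.
split; [|split; [|split]].
- have U : uniq s'.
    rewrite map_inj_in_uniq ?iota_uniq // => i j; rewrite !mem_iota !add0n => /andP[_ Hi] /andP[_ Hj] /= E.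
    apply: oldinj; apply: Sinj; try exact: oldlt.
    have n1 := oldnR i Hi; have n2 := oldnR j Hj.
    case: (ltngtP (nth 0 s (old i)) (nth 0 s (old j))) => // /ltP h.
      by have := gmono _ _ n1 h; move: E; nlia.
    by have := gmono _ _ n2 h; move: E; nlia.
  have Sub : {subset s' <= iota 0 (2*K)}.
    move=> x /mapP [i]; rewrite mem_iota add0n => /andP[_ Hi] ->.
    rewrite mem_iota add0n; apply/andP; split => //; apply: gbound; [apply: Sb; exact: oldlt | exact: oldnR].
  have [_ E] := uniq_min_size U Sub (ltac:(by rewrite size_map !size_iota)).
  exact: uniq_perm U (iota_uniq _ _) E.
- move=> i j Hi Hj; rewrite !Nth // !cold => H.
  apply: Srt; try exact: oldlt.
  rewrite ltnNge; apply/negP => H2; have := gle _ _ H2; move: H; nlia.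
- move=> j j' Hj Hj' NS.
  have jj : j <> j' by move=> E; apply: NS; rewrite E; left.
  rewrite !Nth; try nlia.
  move: (ogS j) (ogS j') (oldS (2*j)) (oldS (2*j+1)) (oldS (2*j')) (oldS (2*j'+1)) => o1 o2 o3 o4 o5 o6.
  have FXY : forall k, lt k K -> k <> t ->
      NP (nth 0 s (2*t)) (nth 0 s (2*t+5)) (nth 0 s (2*oG k)) (nth 0 s (2*oG k+1)).
    move=> k hk nk; move: (ogS k) => ok.
    apply: (NP_adj (P1 := nth 0 s (2*t+1)) (P4 := nth 0 s (2*t+4))).
    + by apply: HFn; nlia.
    + have E1 : 2*(t+2) = 2*t+4 by nlia.
      have E2 : 2*(t+2)+1 = 2*t+5 by nlia.
      by rewrite -E1 -E2; apply: HFn; nlia.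
    + by apply: Sinj'; nlia.
    + by apply: Sinj'; nlia.
    + by apply: Sinj'; nlia.
    + by apply: Sinj'; nlia.
    + exact: Adj.
  case: (eqVneq j t) => [ejt|/eqP njt]; case: (eqVneq j' t) => [ejt'|/eqP njt'].
  + by exfalso; apply: jj; rewrite ejt ejt'.
  + have e1 : old (2*j) = 2*t by nlia.
    have e2 : old (2*j+1) = 2*t+5 by nlia.
    have e3 : old (2*j') = 2*(oG j') by nlia.
    have e4 : old (2*j'+1) = 2*(oG j')+1 by nlia.
    rewrite e1 e2 e3 e4; apply: gNP'; try nlia.
    by apply: FXY; nlia.
  + have e1 : old (2*j') = 2*t by nlia.
    have e2 : old (2*j'+1) = 2*t+5 by nlia.
    have e3 : old (2*j) = 2*(oG j) by nlia.
    have e4 : old (2*j+1) = 2*(oG j)+1 by nlia.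
    rewrite e1 e2 e3 e4; apply: gNP'; try nlia.
    by apply: NP_sym; apply: FXY; nlia.
  + have e1 : old (2*j) = 2*(oG j) by nlia.
    have e2 : old (2*j+1) = 2*(oG j)+1 by nlia.
    have e3 : old (2*j') = 2*(oG j') by nlia.
    have e4 : old (2*j'+1) = 2*(oG j')+1 by nlia.
    rewrite e1 e2 e3 e4; apply: gNP'; try nlia.
    by apply: HFn; nlia.
- move=> j j' Hj Hj' NS; rewrite -subn1 in Hj Hj'.
  have jj : j <> j' by move=> E; apply: NS; rewrite E; left.
  rewrite !Nth; try nlia.
  move: (ogS j) (ogS j') (oldS (2*j+1)) (oldS (2*j+2)) (oldS (2*j'+1)) (oldS (2*j'+2)) => o1 o2 o3 o4 o5 o6.
  have e1 : old (2*j+1) = 2*(oG j)+1 by nlia.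
  have e2 : old (2*j+2) = 2*(oG j)+2 by nlia.
  have e3 : old (2*j'+1) = 2*(oG j')+1 by nlia.
  have e4 : old (2*j'+2) = 2*(oG j')+2 by nlia.
  rewrite e1 e2 e3 e4; apply: gNP'; try nlia.
  by apply: HGn; nlia.
Qed.


Lemma NP_swap12 a b c d : NP a b c d -> NP b a c d.
Proof. rewrite /NP /inb; lia. Qed.
Lemma NP_swap34 a b c d : NP a b c d -> NP a b d c.
Proof. rewrite /NP /inb; lia. Qed.

Definition orient (a1 a2 a3 b1 b2 b3 : nat) : Prop :=
  (lt a1 b1 /\ lt a1 b2 /\ lt a1 b3 /\ lt a2 b1 /\ lt a2 b2 /\ lt a2 b3 /\
   lt a3 b1 /\ lt a3 b2 /\ lt a3 b3) \/
  (lt b1 a1 /\ lt b2 a1 /\ lt b3 a1 /\ lt b1 a2 /\ lt b2 a2 /\ lt b3 a2 /\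
   lt b1 a3 /\ lt b2 a3 /\ lt b3 a3).

Lemma geo1 P1 P2 P3 P4 x y : inb P1 P4 x -> NP x y P1 P2 -> NP x y P3 P4 ->
  orient P1 P4 x P2 P3 y -> inb P2 P3 y.
Proof. rewrite /NP /inb /orient; lia. Qed.

Lemma geo3 P1 P2 P3 P4 p q : inb P2 P3 q -> NP p q P1 P2 -> NP p q P3 P4 ->
  NP P1 P2 P3 P4 -> orient P1 P4 p P2 P3 q -> inb P1 P4 p.
Proof. rewrite /NP /inb /orient; lia. Qed.

Lemma geo_dist P1 P4 p q : inb P1 P4 p -> inb P1 P4 q ->
  lt (p - q + (q - p)) (P1 - P4 + (P4 - P1)).
Proof. rewrite /inb; unfold subn, addn; lia. Qed.


Lemma parity n : exists j, n = 2*j \/ n = 2*j+1.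
Proof.
elim: n => [|n [j [->|->]]]; first by exists 0; left.
  by exists j; right; nlia.
by exists j.+1; left; nlia.
Qed.

Definition dst (a b : nat) := a - b + (b - a).

Lemma adj_site (c s : seq nat) (m : nat) (cinv : nat -> nat) :
  perm_eq s (iota 0 (2*m+2)) ->
  (forall i j, i < 2*m+2 -> j < 2*m+2 -> nth 0 s i < nth 0 s j -> nth 0 c i <= nth 0 c j) ->
  nested_fam (fun j => (nth 0 s (2*j), nth 0 s (2*j+1))) (m+1) ->
  nested_fam (fun j => (nth 0 s (2*j+1), nth 0 s (2*j+2))) m ->
  (forall i, 0 < i -> i < 2*m+1 -> nth 0 c i <> nth 0 c 0 /\ nth 0 c i <> nth 0 c (2*m+1)) ->
  (forall j, j < m -> nth 0 c (2*j+2) = cinv (nth 0 c (2*j+1)) /\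
      nth 0 c (2*j+1) = cinv (nth 0 c (2*j+2)) /\ nth 0 c (2*j+1) <> nth 0 c (2*j+2)) ->
  forall t, t.+1 < m -> nth 0 c (2*t+3) = nth 0 c (2*t+2) ->
  exists t', t'.+1 < m /\ nth 0 c (2*t'+3) = nth 0 c (2*t'+2) /\
     le (dst (nth 0 s (2*t'+1)) (nth 0 s (2*t'+4))) 1.
Proof.
move=> P Srt HF HG H0 Hl.
have [Ss Sb Sinj Ssurj] := perm_facts P.
have Ord : forall i j, i < 2*m+2 -> j < 2*m+2 ->
    lt (nth 0 c i) (nth 0 c j) -> lt (nth 0 s i) (nth 0 s j).
  move=> i j hi hj /ltP h; apply/ltP.
  case: (ltngtP (nth 0 s i) (nth 0 s j)) => // h'.
    by have := Srt j i hj hi h'; nlia.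
  by move: h; rewrite (Sinj _ _ hi hj h') ltnn.
have nss : forall a b c0 d, a < 2*m+2 -> b < 2*m+2 -> c0 < 2*m+2 -> d < 2*m+2 ->
   a <> c0 -> a <> d -> b <> c0 -> b <> d ->
   ~ same_set (nth 0 s a) (nth 0 s b) (nth 0 s c0) (nth 0 s d).
  move=> a b c0 d ha hb hc hd n1 n2 n3 n4 [[E1 E2]|[E1 E2]].
    by apply: n1; apply: Sinj.
  by apply: n2; apply: Sinj.
have Gn : forall j j', lt j m -> lt j' m -> j <> j' ->
   NP (nth 0 s (2*j+1)) (nth 0 s (2*j+2)) (nth 0 s (2*j'+1)) (nth 0 s (2*j'+2)).
  move=> j j' hj hj' nj.
  have := get_nested HG (j:=j) (j':=j'); apply => //=; try nlia.
  apply: nss; nlia.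
have Fn : forall j j', lt j (m+1) -> lt j' (m+1) -> j <> j' ->
   NP (nth 0 s (2*j)) (nth 0 s (2*j+1)) (nth 0 s (2*j')) (nth 0 s (2*j'+1)).
  move=> j j' hj hj' nj.
  have := get_nested HF (j:=j) (j':=j'); apply => //=; try nlia.
  apply: nss; nlia.
have step : forall t, t.+1 < m -> nth 0 c (2*t+3) = nth 0 c (2*t+2) ->
    lt 1 (dst (nth 0 s (2*t+1)) (nth 0 s (2*t+4))) ->
    exists t', t'.+1 < m /\ nth 0 c (2*t'+3) = nth 0 c (2*t'+2) /\
      lt (dst (nth 0 s (2*t'+1)) (nth 0 s (2*t'+4))) (dst (nth 0 s (2*t+1)) (nth 0 s (2*t+4))).
  move=> t ht hc hd.
  have tm : t < m by nlia.
  have [ea [eb nab]] := Hl t tm.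
  have [ec _] := Hl t.+1 ht.
  have e3 : 2*t.+1+1 = 2*t+3 by nlia.
  have e4 : 2*t.+1+2 = 2*t+4 by nlia.
  rewrite e3 e4 in ec.
  have e2 : 2*t.+1 = 2*t+2 by nlia.
  have B : forall k, k < 5 -> 2*t+k < 2*m+2 by move=> k hk; nlia.
  set ca := nth 0 c (2*t+1) in ea eb nab ec.
  set cb := nth 0 c (2*t+2) in ea eb nab ec hc.
  have c4 : nth 0 c (2*t+4) = ca by rewrite ec hc -eb.
  have Or : forall a1 a2 a3 b1 b2 b3, a1 < 2*m+2 -> a2 < 2*m+2 -> a3 < 2*m+2 ->
      b1 < 2*m+2 -> b2 < 2*m+2 -> b3 < 2*m+2 ->
      nth 0 c a1 = ca -> nth 0 c a2 = ca -> nth 0 c a3 = ca ->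
      nth 0 c b1 = cb -> nth 0 c b2 = cb -> nth 0 c b3 = cb ->
      orient (nth 0 s a1) (nth 0 s a2) (nth 0 s a3) (nth 0 s b1) (nth 0 s b2) (nth 0 s b3).
    move=> a1 a2 a3 b1 b2 b3 h1 h2 h3 h4 h5 h6 E1 E2 E3 E4 E5 E6.
    case: (ltngtP ca cb) => h; [left|right|by case: nab]; move/ltP: h => h;
      by repeat split; apply: Ord => //; rewrite ?E1 ?E2 ?E3 ?E4 ?E5 ?E6.
  have [x hx] : exists x, inb (nth 0 s (2*t+1)) (nth 0 s (2*t+4)) x.
    move: hd; rewrite /dst /inb.
    case: (ltngtP (nth 0 s (2*t+1)) (nth 0 s (2*t+4))) => h.
    - by exists (nth 0 s (2*t+1)).+1; nlia.
    - by exists (nth 0 s (2*t+4)).+1; nlia.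
    - by rewrite h; nlia.
  have xN : x < 2*m+2.
    have := Sb _ (B 1 isT); have := Sb _ (B 4 isT); move: hx; rewrite /inb; nlia.
  have [i hi hix] := Ssurj x xN.
  have ci : nth 0 c i = ca.
    have := Ord i (2*t+1) hi (B 1 isT); have := Ord (2*t+1) i (B 1 isT) hi.
    have := Ord i (2*t+4) hi (B 4 isT); have := Ord (2*t+4) i (B 4 isT) hi.
    rewrite hix c4; move: hx; rewrite /inb; nlia.
  have [H01 H02] := H0 (2*t+1) ltac:(nlia) ltac:(nlia).
  have [H03 H04] := H0 (2*t+2) ltac:(nlia) ltac:(nlia).
  have i0 : i <> 0 by move=> E; move: ci; rewrite E => ci; apply: H01.
  have iN : i <> 2*m+1 by move=> E; move: ci; rewrite E => ci; apply: H02.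
  have Gt1 : forall j, j <> t -> j <> t.+1 -> lt j m -> NP (nth 0 s (2*j+1)) (nth 0 s (2*j+2))
      (nth 0 s (2*t+1)) (nth 0 s (2*t+2)) /\ NP (nth 0 s (2*j+1)) (nth 0 s (2*j+2))
      (nth 0 s (2*t+3)) (nth 0 s (2*t+4)).
    move=> j n1 n2 hj; split; first by apply: Gn; nlia.
    by have := Gn j t.+1 hj ltac:(nlia) n2; rewrite e3 e4.
  have [i' [hi' [ci' [N1 N2]]]] : exists i', i' < 2*m+2 /\ nth 0 c i' = cb /\
      NP x (nth 0 s i') (nth 0 s (2*t+1)) (nth 0 s (2*t+2)) /\
      NP x (nth 0 s i') (nth 0 s (2*t+3)) (nth 0 s (2*t+4)).
    have [j [hj|hj]] := parity (i - 1).
    - have Ei : i = 2*j+1 by nlia.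
      have jm : j < m by nlia.
      have [f1 [f2 _]] := Hl j jm.
      have jt : j <> t by move=> E; move: hx; rewrite -hix Ei E /inb; nlia.
      have jt1 : j <> t.+1 by move=> E; move: ci; rewrite Ei E e3 hc => E'; apply: nab.
      exists (2*j+2); split; first nlia.
      split; first by rewrite f1 -Ei ci.
      by rewrite -hix Ei; apply: Gt1 => //; nlia.
    - have Ei : i = 2*j+2 by nlia.
      have jm : j < m by nlia.
      have [f1 [f2 _]] := Hl j jm.
      have jt : j <> t by move=> E; move: ci; rewrite Ei E => E'; apply: nab.
      have jt1 : j <> t.+1 by move=> E; move: hx; rewrite -hix Ei E e4 /inb; nlia.
      exists (2*j+1); split; first nlia.
      split; first by rewrite f2 -Ei ci.
      rewrite -hix Ei; have [G1 G2] := Gt1 j jt jt1 ltac:(nlia).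
      by split; apply: NP_swap12.
  have Gtt : NP (nth 0 s (2*t+1)) (nth 0 s (2*t+2)) (nth 0 s (2*t+3)) (nth 0 s (2*t+4)).
    by have := Gn t t.+1 ltac:(nlia) ltac:(nlia) ltac:(nlia); rewrite e3 e4.
  have yin : inb (nth 0 s (2*t+2)) (nth 0 s (2*t+3)) (nth 0 s i').
    apply: (geo1 hx N1 N2); rewrite -hix; apply: Or => //; try exact: B.
  have [k [ab [ina inb']]] : exists k, lt k (m+1) /\
      inb (nth 0 s (2*t+2)) (nth 0 s (2*t+3)) (nth 0 s (2*k)) /\
      inb (nth 0 s (2*t+2)) (nth 0 s (2*t+3)) (nth 0 s (2*k+1)).
    have [k [hk|hk]] := parity i'.
    - have kt : k <> t.+1 by move=> E; move: yin; rewrite hk E e2 /inb; nlia.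
      have := Fn k t.+1 ltac:(nlia) ltac:(nlia) kt.
      rewrite e3 e2.
      move=> /NP_sym [_ Hiff]; exists k; split; first nlia.
      by split; [rewrite -hk | apply (proj1 Hiff); rewrite -hk].
    - have kt : k <> t.+1 by move=> E; move: yin; rewrite hk E e3 /inb; nlia.
      have := Fn k t.+1 ltac:(nlia) ltac:(nlia) kt.
      rewrite e3 e2.
      move=> /NP_sym [_ Hiff]; exists k; split; first nlia.
      by split; [apply (proj2 Hiff); rewrite -hk | rewrite -hk].
  have kN : 2*k+1 < 2*m+2 by nlia.
  have kN0 : 2*k < 2*m+2 by nlia.
  have cbk : forall q, q < 2*m+2 -> inb (nth 0 s (2*t+2)) (nth 0 s (2*t+3)) (nth 0 s q) ->
      nth 0 c q = cb.
    move=> q hq hin.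
    have := Ord q (2*t+2) hq (B 2 isT); have := Ord (2*t+2) q (B 2 isT) hq.
    have := Ord q (2*t+3) hq (B 3 isT); have := Ord (2*t+3) q (B 3 isT) hq.
    rewrite hc; move: hin; rewrite /inb; nlia.
  have ck0 := cbk _ kN0 ina.
  have ck1 := cbk _ kN inb'.
  have k0 : k <> 0 by move=> E; move: ck0; rewrite E muln0 => E'; apply: H03.
  have km : k <> m by move=> E; move: ck1; rewrite E => E'; apply: H04.
  pose t' := k - 1.
  have kE : k = t'.+1 by rewrite /t'; nlia.
  have t'm : t' < m by nlia.
  have [g1 [g2 _]] := Hl t' t'm.
  have [g3 [g4 _]] := Hl k ltac:(nlia).
  have E1 : 2*t'+2 = 2*k by nlia.
  have E2 : 2*t'+3 = 2*k+1 by nlia.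
  have E3 : 2*t'+4 = 2*k+2 by nlia.
  rewrite E1 in g1 g2.
  have c1' : nth 0 c (2*t'+1) = ca by rewrite g2 ck0.
  have c4' : nth 0 c (2*k+2) = ca by rewrite g3 ck1.
  have tt1 : t' <> t by move=> E; move: ina; rewrite kE E e2 /inb; nlia.
  have tt2 : t' <> t.+1 by move=> E; move: ck0; rewrite -E1 E e4 c4 => E'; apply: nab.
  have kt1 : k <> t by move=> E; move: ck1; rewrite E => E'; apply: nab.
  have kt2 : k <> t.+1 by move=> E; move: ina; rewrite E e2 /inb; nlia.
  have [Ga Gb] := Gt1 t' tt1 tt2 ltac:(nlia).
  have [Gc Gd] := Gt1 k kt1 kt2 ltac:(nlia).
  rewrite E1 in Ga Gb.
  exists t'; split; first by rewrite -kE; nlia.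
  split; first by rewrite E1 E2 ck0 ck1.
  rewrite E3; apply: geo_dist.
  - apply: (geo3 ina Ga Gb Gtt); apply: Or => //; try exact: B; try nlia.
  - apply: (geo3 inb' (NP_swap12 Gc) (NP_swap12 Gd) Gtt); apply: Or => //; try exact: B; try nlia.
suff H : forall d t, t.+1 < m -> nth 0 c (2*t+3) = nth 0 c (2*t+2) ->
    le (dst (nth 0 s (2*t+1)) (nth 0 s (2*t+4))) d ->
    exists t', t'.+1 < m /\ nth 0 c (2*t'+3) = nth 0 c (2*t'+2) /\
     le (dst (nth 0 s (2*t'+1)) (nth 0 s (2*t'+4))) 1.
  by move=> t ht hc; apply: (H _ t ht hc); apply: le_n.
elim=> [|d IH] t ht hc hd.
  by exists t; split => //; split => //; lia.
have [h1|h1] : le (dst (nth 0 s (2*t+1)) (nth 0 s (2*t+4))) 1 \/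
               lt 1 (dst (nth 0 s (2*t+1)) (nth 0 s (2*t+4))) by lia.
  by exists t.
have [t' [ht' [hc' hd']]] := step t ht hc h1.
apply: (IH t' ht' hc'); lia.
Qed.


Definition wl n (e : seq (letter n)) : seq nat :=
  flatten [seq [:: code a; code (linv a)] | a <- e].

Lemma wl_cat n (p q : seq (letter n)) : wl (p ++ q) = wl p ++ wl q.
Proof. by rewrite /wl map_cat flatten_cat. Qed.

Lemma size_wl n (e : seq (letter n)) : size (wl e) = 2 * size e.
Proof. elim: e => [|a e IH] //=; rewrite IH; nlia. Qed.

Lemma whiteE n (e : seq (letter n)) : whitehead e = 0 :: wl e ++ [:: z1 n].
Proof. by []. Qed.

Definition cinv (k : nat) := if odd k then k.+1 else k.-1.

Lemma code_facts n (a : letter n) :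
  [/\ code (linv a) = cinv (code a), code a = cinv (code (linv a)),
      code a <> code (linv a), 0 < code a & code a < z1 n].
Proof.
case: a => k b; rewrite /code /linv /cinv /z1 /=.
have hk := ltn_ord k.
case: b => /=; rewrite addn0 !oddD; case: (odd k) => /=; split; nlia.
Qed.

Lemma size_white n (e : seq (letter n)) : size (whitehead e) = 2 * size e + 2.
Proof. by rewrite whiteE /= size_cat size_wl /=; nlia. Qed.

Lemma white_last n (e : seq (letter n)) : nth 0 (whitehead e) (2 * size e + 1) = z1 n.
Proof. by rewrite whiteE addn1 /= nth_cat size_wl ltnn subnn. Qed.

Lemma white_nth n (p r : seq (letter n)) (a : letter n) :
  nth 0 (whitehead (p ++ a :: r)) (2 * size p + 1) = code a /\
  nth 0 (whitehead (p ++ a :: r)) (2 * size p + 2) = code (linv a).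
Proof.
rewrite whiteE wl_cat -catA !addn1 (_ : 2 * size p + 2 = (2 * size p).+2); last nlia.
by rewrite /= nth_cat size_wl ltnn subnn /= nth_cat size_wl ltnNge leqnSn /= subSnn.
Qed.

Lemma white_letter n (e : seq (letter n)) j : j < size e ->
  exists a : letter n, nth 0 (whitehead e) (2*j+1) = code a /\ nth 0 (whitehead e) (2*j+2) = code (linv a).
Proof.
move=> hj; case E: (drop j e) => [|a r].
  by move: (congr1 size E); rewrite size_drop /=; nlia.
exists a; have sz : size (take j e) = j by rewrite size_take hj.
have -> : e = take j e ++ a :: r by rewrite -E cat_take_drop.
by have := white_nth (take j e) r a; rewrite sz.
Qed.

Lemma code_inj n (x y : letter n) : code x = code y -> x = y.
Proof.
case: x y => [k1 b1] [k2 b2]; rewrite /code /= => E.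
have Eb : b1 = b2.
  move: E; case: b1; case: b2 => //= E.
  1,2: exfalso; unfold addn, muln in E; lia.
subst b2; have : nat_of_ord k1 = nat_of_ord k2 by nlia.
by move/ord_inj => ->.
Qed.

Lemma nth_catR (s1 s2 : seq nat) i : size s1 <= i -> nth 0 (s1 ++ s2) i = nth 0 s2 (i - size s1).
Proof. by rewrite nth_cat ltnNge => ->. Qed.
Lemma nth_catL (s1 s2 : seq nat) i : i < size s1 -> nth 0 (s1 ++ s2) i = nth 0 s1 i.
Proof. by rewrite nth_cat => ->. Qed.

Lemma key n (e : seq (letter n)) : ~ reduced e -> planar_expr e ->
  exists e', cancel_step e e' /\ planar_expr e' /\ size e' < size e.
Proof.
move=> Hr Pe.
have [p [q [a Ee]]] : exists p q (a : letter n), e = p ++ a :: linv a :: q.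
  apply: NNPP => Hn; apply: Hr => p q a E; apply: Hn; by exists p, q, a.
set m := size e.
have Sw : size (whitehead e) = 2*m+2 by rewrite size_white.
move: Pe; rewrite /planar_expr /planar_tuple => Pe; cbv beta zeta in Pe.
case: Pe => s [P [Srt [HF HG]]].
have HM : size (whitehead e) %/ 2 = m+1.
  by rewrite Sw (_ : 2*m+2 = (m+1)*2) ?mulnK //; nlia.
have P' := P; have Srt' := Srt; have HF' := HF; have HG' := HG.
rewrite Sw in P' Srt'; rewrite HM in HF' HG'; rewrite addn1 /= in HG'.
have H0 : forall i, 0 < i -> i < 2*m+1 ->
    nth 0 (whitehead e) i <> nth 0 (whitehead e) 0 /\
    nth 0 (whitehead e) i <> nth 0 (whitehead e) (2*m+1).
  move=> i h1 h2; rewrite white_last (_ : nth 0 (whitehead e) 0 = 0) //.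
  have [j [hj|hj]] := parity (i - 1).
  - have jm : j < m by nlia.
    have [b [E1 E2]] := white_letter jm.
    have -> : i = 2*j+1 by nlia.
    have [_ _ _ c1 c2] := code_facts b.
    by rewrite E1; split; nlia.
  - have jm : j < m by nlia.
    have [b [E1 E2]] := white_letter jm.
    have -> : i = 2*j+2 by nlia.
    have [_ _ _ c1 c2] := code_facts (linv b).
    by rewrite E2; split; nlia.
have Hl : forall j, j < m -> nth 0 (whitehead e) (2*j+2) = cinv (nth 0 (whitehead e) (2*j+1)) /\
      nth 0 (whitehead e) (2*j+1) = cinv (nth 0 (whitehead e) (2*j+2)) /\
      nth 0 (whitehead e) (2*j+1) <> nth 0 (whitehead e) (2*j+2).
  move=> j jm; have [b [E1 E2]] := white_letter jm.
  by have [f1 f2 f3 _ _] := code_facts b; rewrite E1 E2.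
have ht : (size p).+1 < m by rewrite /m Ee size_cat /=; nlia.
have hc : nth 0 (whitehead e) (2*size p+3) = nth 0 (whitehead e) (2*size p+2).
  have [_ E2] := white_nth p (linv a :: q) a.
  have := white_nth (p ++ [:: a]) q (linv a); rewrite -catA /= size_cat /= => [[E3 _]].
  rewrite Ee E2 -E3; congr nth; nlia.
have [t [htm [hct hadj]]] := adj_site P' Srt' HF' HG' H0 Hl ht hc.
case E: (drop t e) => [|a' [|b' r']].
- by move: (congr1 size E); rewrite size_drop /=; nlia.
- by move: (congr1 size E); rewrite size_drop /=; nlia.
set p' := take t e.
have Ee' : e = p' ++ a' :: b' :: r' by rewrite -E cat_take_drop.
have szp : size p' = t by rewrite size_take; case: ltnP => //; nlia.
have Eb : b' = linv a'.
  apply: code_inj.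
  have [_ F2] := white_nth p' (b' :: r') a'.
  have := white_nth (p' ++ [:: a']) r' b'; rewrite -catA /= size_cat /= => [[F3 _]].
  rewrite -F2 -F3 -Ee' szp -hct; congr nth; nlia.
exists (p' ++ r'); split; first by exists p', r', a'; rewrite -Eb.
have Sz : size e = size p' + size r' + 2 by rewrite Ee' size_cat /=; nlia.
split; last by rewrite /m Sz size_cat; nlia.
have sA : size (0 :: wl p') = 2*t+1 by rewrite /= size_wl szp addn1.
have Ec : whitehead e = (0 :: wl p') ++
    [:: code a'; code (linv a'); code b'; code (linv b')] ++ (wl r' ++ [:: z1 n]).
  by rewrite Ee' whiteE wl_cat -!catA.
have Ec' : whitehead (p' ++ r') = (0 :: wl p') ++ (wl r' ++ [:: z1 n]).
  by rewrite whiteE wl_cat -!catA.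
apply: (transfer (c := whitehead e) (c' := whitehead (p' ++ r')) (s := s) (t := t)
   (K := size p' + size r' + 1)) => //.
- by rewrite size_white size_cat; nlia.
- by rewrite Sw /m Sz; nlia.
- by nlia.
- by move=> i hi; rewrite Ec Ec' !nth_catL // sA.
- move=> i hi.
  have h1 : size (0 :: wl p') <= i by rewrite sA; nlia.
  have h2 : size (0 :: wl p') <= i+4 by rewrite sA; nlia.
  rewrite Ec Ec' (nth_catR _ h1) (nth_catR _ h2) sA.
  have h3 : size [:: code a'; code (linv a'); code b'; code (linv b')] <= i + 4 - (2*t+1).
    by rewrite /=; nlia.
  rewrite (nth_catR _ h3) /=; congr nth; nlia.
Qed.

Theorem propositionA (n : nat) (w : seq (letter n)) :
  reduced w ->
  (exists e : seq (letter n), free_eq e w /\ planar_expr e) ->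
  planar_expr w.
Proof.
move=> Hw [e [He Pe]].
move: {2}(size e) (leqnn (size e)) => k.
elim: k e He Pe => [|k IH] e He Pe Hk.
  have Hr : reduced e by case: e Hk {He Pe} => // _ [|? ?] ? ?.
  by rewrite -(free_eq_reduced He Hr Hw).
have [Hr|Hr] := classic (reduced e).
  by rewrite -(free_eq_reduced He Hr Hw).
have [e' [Hc [Pe' Hs]]] := key Hr Pe.
apply: (IH e') => //; last by nlia.
apply: rst_trans He; apply: rst_sym; exact: rst_step.
Qed.
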